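(* Let $p\in\Delta_d$ and let $\pi$ be a permutation of $[d]$ with $p_{(i)}:=p_{\pi(i)}$ non-increasing in $i$, and suppose $\tfrac12< p_{(1)}<\tfrac56$. Fix $h\in\{2,\dots,d\}$ with $p_{(h)}>0$ and define the $(h-1)$-parameter sub-model: for $\theta=(\theta_2,\dots,\theta_h)$, let $P_\theta$ be the distribution on $[d]$ with $P_\theta(\pi(i))=\theta_i$ for $2\le i\le h$, $P_\theta(\pi(1))=\theta_1:=1-\sum_{i=2}^h\theta_i-\sum_{i=h+1}^d p_{(i)}$, and $P_\theta(\pi(i))=p_{(i)}$ for $i>h$. Let $\theta(p)=(p_{(2)},\dots,p_{(h)})$, let $0<B\le p_{(h)}/3$ and $\mathcal{N}_{B,h}(p)=\theta(p)+[-B,B]^{h-1}$. Then $P_{\theta'}$ is a valid distribution for all $\theta'\in\mathcal{N}_{B,h}(p)$, and for every channel $W$ from $[d]$ to a finite alphabet $\mathcal{Y}$ with $|\mathcal{Y}|\le 2^b$ and every $\theta'\in\mathcal{N}_{B,h}(p)$, $$\operatorname{Tr}\left(I_W(\theta')\right)\le 2^b\left(6h+\frac{3}{2p_{(h)}}\right)+\frac{3h}{2p_{(h)}},$$ where $I_W(\theta')$ is the Fisher information matrix (with respect to $(\theta_2,\dots,\theta_h)$) of $Y\sim W(\cdot\mid X)$, $X\sim P_{\theta'}$.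
   Context: $\Delta_d$ denotes the probability simplex in $\mathbb{R}^d$. The Fisher information matrix of $Y$ is $[I_W(\theta)]_{jk}=\sum_{y}\frac{\partial_{\theta_j}P^Y_\theta(y)\,\partial_{\theta_k}P^Y_\theta(y)}{P^Y_\theta(y)}$ where $P^Y_\theta(y)=\sum_x W(y\mid x)P_\theta(x)$. *)

(* Defs.v *)
From HB Require Import structures.
From mathcomp Require Import all_boot all_order all_algebra.
From mathcomp Require Import fingroup perm.
From mathcomp Require Import reals topology normedtype derive.
Import numFieldNormedType.Exports.
Set Implicit Arguments. Unset Strict Implicit. Unset Printing Implicit Defensive.
Import Order.TTheory GRing.Theory Num.Theory.
Local Open Scope ring_scope.

(* Sorted positions are
   0-based: the paper's p_(i) is  p (pi (i-1)).  The paper's h is  h0.+1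
   where h0 : 'I_d is the 0-based position of the last free parameter.
   A parameter vector theta is a function 'I_d -> R indexed by sorted
   positions; only the coordinates 0 < i <= h0 (paper's theta_2..theta_h)
   are used. *)

Section Model.
Variables (R : realType) (d : nat).

Definition in_simplex (p : 'I_d -> R) :=
  (forall i, 0 <= p i) /\ \sum_i p i = 1.

Definition is_param (h0 : 'I_d) (i : 'I_d) : bool := (0 < i)%N && (i <= h0)%N.

Definition Ptheta (p : 'I_d -> R) (pi : 'S_d) (h0 : 'I_d)
    (theta : 'I_d -> R) (x : 'I_d) : R :=
  let i := (pi^-1)%g x in
  if is_param h0 i then theta i
  else if (i == 0 :> nat) then
    1 - \sum_(j : 'I_d | is_param h0 j) theta j
      - \sum_(j : 'I_d | (h0 < j)%N) p (pi j)
  else p (pi i).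

Definition in_nbhd (p : 'I_d -> R) (pi : 'S_d) (h0 : 'I_d) (B : R)
    (theta : 'I_d -> R) :=
  forall i, is_param h0 i -> `|theta i - p (pi i)| <= B.

Definition PY (Y : finType) (W : 'I_d -> Y -> R) (P : 'I_d -> R) (y : Y) : R :=
  \sum_x W x y * P x.

Definition shift (theta : 'I_d -> R) (j : 'I_d) (t : R) : 'I_d -> R :=
  fun i => if i == j then theta i + t else theta i.

Definition dPY (Y : finType) (W : 'I_d -> Y -> R) (p : 'I_d -> R) (pi : 'S_d)
    (h0 : 'I_d) (theta : 'I_d -> R) (j : 'I_d) (y : Y) : R :=
  derive1 (fun t : R => PY W (Ptheta p pi h0 (shift theta j t)) y) 0.

Definition fisher_diag (Y : finType) (W : 'I_d -> Y -> R) (p : 'I_d -> R)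
    (pi : 'S_d) (h0 : 'I_d) (theta : 'I_d -> R) (j : 'I_d) : R :=
  \sum_y (dPY W p pi h0 theta j y ^+ 2) / PY W (Ptheta p pi h0 theta) y.

Definition fisher_trace (Y : finType) (W : 'I_d -> Y -> R) (p : 'I_d -> R)
    (pi : 'S_d) (h0 : 'I_d) (theta : 'I_d -> R) : R :=
  \sum_(j : 'I_d | is_param h0 j) fisher_diag W p pi h0 theta j.

Definition is_channel (Y : finType) (W : 'I_d -> Y -> R) :=
  (forall x y, 0 <= W x y) /\ (forall x, \sum_y W x y = 1).

End Model.

(* Main.v *)
Require Import Defs.
From HB Require Import structures.
From mathcomp Require Import all_boot all_order all_algebra.
From mathcomp Require Import fingroup perm.
From mathcomp Require Import reals topology normedtype derive.
From mathcomp Require Import lra.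
From mathcomp Require Import boolp functions.
Import numFieldNormedType.Exports.
Import Order.TTheory GRing.Theory Num.Theory.
Local Open Scope ring_scope.

Lemma derive1_affine (R : realType) (c k : R) : derive1 (fun t : R => c + t * k) 0 = k.
Proof.
have -> : (fun t : R => c + t * k) = (cst c \+ k \*: id) by apply/funext => t /=; rewrite mulrC.
rewrite derive1E; apply: derive_val.
apply: is_derive_eq.
by rewrite add0r scaler1.
Qed.

Section Aux.
Variables (R : realType) (d : nat) (p : 'I_d -> R) (pi : 'S_d) (h0 : 'I_d).

Lemma part_sum (i0 : 'I_d) (Hi0 : val i0 = 0%N) (F : 'I_d -> R) :
  \sum_i F i = F i0 + \sum_(j : 'I_d | is_param h0 j) F j + \sum_(j : 'I_d | (h0 < j)%N) F j.
Proof.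
rewrite (bigD1 i0) //= (bigID (fun j : 'I_d => (j <= h0)%N)) /= addrA.
congr (_ + _ + _); apply: eq_bigl => j; rewrite -val_eqE Hi0 /is_param.
  by rewrite lt0n.
rewrite -ltnNge; case: (ltnP h0 j) => Hj; rewrite ?andbF ?andbT //.
by apply/eqP => Hj0; rewrite Hj0 in Hj.
Qed.

Lemma P_param (theta : 'I_d -> R) (j : 'I_d) : is_param h0 j -> Ptheta p pi h0 theta (pi j) = theta j.
Proof. by rewrite /Ptheta /= permK => ->. Qed.

Lemma P_0 (theta : 'I_d -> R) (i0 : 'I_d) : val i0 = 0%N -> Ptheta p pi h0 theta (pi i0) =
  1 - \sum_(j : 'I_d | is_param h0 j) theta j - \sum_(j : 'I_d | (h0 < j)%N) p (pi j).
Proof. by rewrite /Ptheta /= permK /is_param => ->. Qed.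

Lemma P_rest (theta : 'I_d -> R) (j : 'I_d) : (h0 < j)%N -> Ptheta p pi h0 theta (pi j) = p (pi j).
Proof.
rewrite /Ptheta /= permK /is_param => Hj.
have -> : (j <= h0)%N = false by apply/negbTE; rewrite -ltnNge.
rewrite andbF; case: eqP => // Hj0; by rewrite Hj0 in Hj.
Qed.

Lemma P_shift (theta : 'I_d -> R) (j : 'I_d) (t : R) (i0 x : 'I_d) : is_param h0 j -> val i0 = 0%N ->
  Ptheta p pi h0 (Defs.shift theta j t) x =
  Ptheta p pi h0 theta x + t * ((x == pi j)%:R - (x == pi i0)%:R).
Proof.
move=> Hj Hi0.
rewrite -(permKV pi x); move: ((pi^-1)%g x) => i.
rewrite !(inj_eq (@perm_inj _ pi)).
case Hp: (is_param h0 i).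
  rewrite !P_param // /Defs.shift.
  have -> : (i == i0) = false.
    apply/negbTE; rewrite -val_eqE Hi0; move: Hp; rewrite /is_param.
    by case/andP; rewrite lt0n.
  by case: eqP => _; rewrite ?subr0 ?mulr1 ?mulr0 ?addr0.
case: (boolP (val i == 0%N)) => Hi.
  have -> : i = i0 by apply: val_inj; rewrite Hi0; exact/eqP.
  rewrite !P_0 //.
  have -> : (i0 == j) = false.
    apply/negbTE; rewrite -val_eqE Hi0; move: Hj; rewrite /is_param.
    by case/andP; rewrite eq_sym -lt0n.
  rewrite eqxx (bigD1 j) //= [X in _ = 1 - X - _ + _](bigD1 j) //= /Defs.shift eqxx.
  rewrite (eq_bigr (fun k => theta k)); last by move=> k /andP[_ /negbTE ->].
  by rewrite sub0r mulrN1; lra.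
have Hgt : (h0 < i)%N.
  by move: Hp; rewrite /is_param lt0n Hi /= => /negbT; rewrite -ltnNge.
rewrite !P_rest //.
have -> : (i == j) = false.
  apply/negbTE; apply/eqP => Hij; move: Hp; rewrite Hij Hj //.
have -> : (i == i0) = false.
  by apply/negbTE; rewrite -val_eqE Hi0.
by rewrite subr0 mulr0 addr0.
Qed.


Lemma PY_shift (Y : finType) (W : 'I_d -> Y -> R) (theta : 'I_d -> R) (j : 'I_d)
  (t : R) (i0 : 'I_d) (y : Y) : is_param h0 j -> val i0 = 0%N ->
  PY W (Ptheta p pi h0 (Defs.shift theta j t)) y =
  PY W (Ptheta p pi h0 theta) y + t * (W (pi j) y - W (pi i0) y).
Proof.
move=> Hj Hi0; rewrite /PY.
under eq_bigr do rewrite (P_shift _ _ _ _ _ Hj Hi0) mulrDr.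
rewrite big_split /=; congr (_ + _).
rewrite (bigD1 (pi j)) //= eqxx.
have Hji : (pi j == pi i0) = false.
  apply/negbTE; rewrite (inj_eq (@perm_inj _ pi)) -val_eqE Hi0.
  by move: Hj; rewrite /is_param; case/andP; rewrite -lt0n.
rewrite Hji (bigD1 (pi i0)) /=; last by rewrite eq_sym Hji.
rewrite eqxx eq_sym Hji.
rewrite big1; last by move=> x /andP[/negbTE -> /negbTE ->]; rewrite subrr !mulr0.
by rewrite addr0 (_ : false%:R = 0 :> R) // (_ : true%:R = 1 :> R) //; lra.
Qed.

Lemma dPY_eq (Y : finType) (W : 'I_d -> Y -> R) (theta : 'I_d -> R) (j : 'I_d)
  (i0 : 'I_d) (y : Y) : is_param h0 j -> val i0 = 0%N ->
  dPY W p pi h0 theta j y = W (pi j) y - W (pi i0) y.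
Proof.
move=> Hj Hi0; rewrite /dPY.
rewrite (_ : (fun t => _) = (fun t => PY W (Ptheta p pi h0 theta) y + t * (W (pi j) y - W (pi i0) y))).
  exact: derive1_affine.
by apply/funext => t; rewrite (PY_shift _ _ _ _ _ _ _ Hj Hi0).
Qed.

Lemma sum_param_const (c : R) : 0 <= c ->
  \sum_(j : 'I_d | is_param h0 j) c <= (h0.+1)%:R * c.
Proof.
move=> c0.
rewrite (eq_bigl (fun j : 'I_d => (0 < j)%N && (j < h0.+1)%N)); last first.
  by move=> j; rewrite /is_param ltnS.
rewrite -(@big_ord_widen_cond _ 0 +%R h0.+1 d (fun j => (0 < j)%N) (fun _ => c) (ltn_ord h0)).
rewrite big_mkcond /=.
apply: le_trans (_ : _ <= \sum_(j < h0.+1) c) _.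
  by apply: ler_sum => j _; case: ifP.
by rewrite sumr_const card_ord mulr_natl.
Qed.

End Aux.
Arguments part_sum {R d h0 i0}.
Arguments dPY_eq {R d p pi h0 Y W theta j i0 y}.
Arguments sum_param_const {R d h0 c}.

Lemma per_y (R : realType) (a b qj q0 P : R) : 0 <= a -> 0 <= b -> 0 < qj -> 0 < q0 ->
  a * qj + b * q0 <= P -> (a - b) ^+ 2 / P <= a / qj + b / q0.
Proof.
move=> a0 b0 qj0 q00 HP.
have u0 : 0 <= a / qj by apply: divr_ge0 => //; exact: ltW.
have v0 : 0 <= b / q0 by apply: divr_ge0 => //; exact: ltW.
have HP0 : 0 <= P.
  have : 0 <= a * qj + b * q0 by apply: addr_ge0; apply: mulr_ge0 => //; exact: ltW.
  lra.
case: (eqVneq P 0) => [->|Pn0]; first by rewrite invr0 mulr0; lra.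
have Ppos : 0 < P by rewrite lt_def Pn0.
rewrite ler_pdivrMr //.
have ea : a = a / qj * qj by rewrite divfK // gt_eqF.
have eb : b = b / q0 * q0 by rewrite divfK // gt_eqF.
move: u0 v0 ea eb HP; set u := a / qj; set v := b / q0 => u0 v0 ea eb HP.
rewrite ea eb; rewrite ea eb in HP.
have h1 := ler_wpM2l u0 HP.
have h2 := ler_wpM2l v0 HP.
have h3 : 0 <= u * v * (qj + q0) ^+ 2 by apply: mulr_ge0; [exact: mulr_ge0 | exact: sqr_ge0].
nra.
Qed.

Theorem mainTheorem8 (R : realType) (d : nat) (p : 'I_d -> R) (pi : 'S_d)
  (h0 : 'I_d) (B : R) :
  in_simplex p ->
  (forall i j : 'I_d, (i <= j)%N -> p (pi j) <= p (pi i)) ->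
  (forall i0 : 'I_d, (i0 = 0 :> nat) -> 2^-1 < p (pi i0) /\ p (pi i0) < 5 / 6) ->
  (1 <= h0)%N ->
  0 < p (pi h0) ->
  0 < B -> B <= p (pi h0) / 3 ->
  (forall theta : 'I_d -> R, in_nbhd p pi h0 B theta ->
     in_simplex (Ptheta p pi h0 theta)) /\
  (forall (Y : finType) (b : nat) (W : 'I_d -> Y -> R),
     (#|Y| <= 2 ^ b)%N -> is_channel W ->
     forall theta : 'I_d -> R, in_nbhd p pi h0 B theta ->
       fisher_trace W p pi h0 theta <=
         2 ^+ b * (6 * (h0.+1)%:R + 3 / (2 * p (pi h0)))
         + 3 * (h0.+1)%:R / (2 * p (pi h0))).
Proof.
move=> [p0 p1] Hmono Hp0 Hh0 Hph Bpos HB.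
pose i0 : 'I_d := Ordinal (leq_ltn_trans (leq0n h0) (ltn_ord h0)).
have Hi0 : val i0 = 0%N by [].
have [Hq0lo _] := Hp0 i0 Hi0.
set S := \sum_(j : 'I_d | is_param h0 j) p (pi j).
set T := \sum_(j : 'I_d | (h0 < j)%N) p (pi j).
have Hsum : p (pi i0) + S + T = 1.
  by rewrite -p1 (reindex_inj (@perm_inj _ pi)) (part_sum (h0:=h0) Hi0 (fun i => p (pi i))).
have T0 : 0 <= T by apply: sumr_ge0.
have HpS : forall j, is_param h0 j -> p (pi h0) <= p (pi j).
  by move=> j /andP[_ Hj]; apply: Hmono.
have HB' : forall theta, in_nbhd p pi h0 B theta ->
    \sum_(j : 'I_d | is_param h0 j) theta j - S <= S / 3.
  move=> theta Hn; rewrite /S -sumrB mulr_suml.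
  apply: ler_sum => j Hj.
  have := ler_norm (theta j - p (pi j)); have := Hn j Hj; have := HpS j Hj.
  lra.
have Hq0 : forall theta, in_nbhd p pi h0 B theta -> 3^-1 < Ptheta p pi h0 theta (pi i0).
  move=> theta Hn; rewrite P_0 // -/T; have := HB' theta Hn; lra.
have Hqj : forall theta, in_nbhd p pi h0 B theta -> forall j, is_param h0 j ->
    2 / 3 * p (pi h0) <= theta j.
  move=> theta Hn j Hj; have := Hn j Hj; rewrite ler_norml => /andP[H1 _].
  have := HpS j Hj; lra.
have part1 : forall theta : 'I_d -> R, in_nbhd p pi h0 B theta ->
     in_simplex (Ptheta p pi h0 theta).
  move=> theta Hn; split.
    move=> x; rewrite -(permKV pi x); move: ((pi^-1)%g x) => i.
    case Hp: (is_param h0 i).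
      by rewrite P_param //; have := Hqj theta Hn i Hp; lra.
    case: (boolP (val i == 0%N)) => Hi.
      have -> : i = i0 by apply: val_inj; rewrite Hi0; exact/eqP.
      by have := Hq0 theta Hn; lra.
    have Hgt : (h0 < i)%N.
      by move: Hp; rewrite /is_param lt0n Hi /= => /negbT; rewrite -ltnNge.
    by rewrite P_rest.
  rewrite (reindex_inj (@perm_inj _ pi)) (part_sum (h0:=h0) Hi0) P_0 //.
  have -> : \sum_(j : 'I_d | is_param h0 j) Ptheta p pi h0 theta (pi j) =
            \sum_(j : 'I_d | is_param h0 j) theta j.
    by apply: eq_bigr => j Hj; rewrite P_param.
  have -> : \sum_(j : 'I_d | (h0 < j)%N) Ptheta p pi h0 theta (pi j) = T.
    by apply: eq_bigr => j Hj; rewrite P_rest.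
  rewrite -/T; lra.
split => //.
move=> Y b W HY [W0 W1] theta Hn.
have [q0 _] := part1 theta Hn.
have qz0 := Hq0 theta Hn.
rewrite /fisher_trace.
apply: le_trans (_ : _ <= \sum_(j : 'I_d | is_param h0 j) (3 / (2 * p (pi h0)) + 3)) _.
  apply: ler_sum => j Hj; rewrite /fisher_diag.
  have qj0 := Hqj theta Hn j Hj.
  apply: le_trans (_ : _ <= \sum_y (W (pi j) y / theta j + W (pi i0) y / Ptheta p pi h0 theta (pi i0))) _.
    apply: ler_sum => y _; rewrite (dPY_eq Hj Hi0).
    apply: per_y; [exact: W0 | exact: W0 | lra | lra | ].
    rewrite /PY (bigD1 (pi j)) //= (@P_param _ _ p pi h0 theta j Hj).
    have Hji : (pi i0 != pi j).
      rewrite (inj_eq (@perm_inj _ pi)) -val_eqE Hi0.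
      by move: Hj; rewrite /is_param; case/andP; rewrite eq_sym -lt0n.
    rewrite (bigD1 (pi i0)) /=; last exact: Hji.
    rewrite addrA lerDl; apply: sumr_ge0 => x _; exact: mulr_ge0.
  rewrite big_split /= -!mulr_suml !W1 !mul1r.
  apply: lerD.
    rewrite -(div1r (theta j)) ler_pdivrMr; last lra.
    rewrite mulrAC ler_pdivlMr; last lra.
    lra.
  rewrite -div1r ler_pdivrMr; last lra.
  lra.
apply: le_trans (sum_param_const (h0:=h0) _) _.
  apply: addr_ge0; last lra.
  by apply: divr_ge0; lra.
have e1 : 1 <= (2 : R) ^+ b by apply: exprn_ege1; lra.
have hn : 0 <= (h0.+1)%:R :> R by [].
have hq : 0 <= 3 / (2 * p (pi h0)) by apply: divr_ge0; lra.
have : 0 <= (2 ^+ b - 1) * (6 * (h0.+1)%:R + 3 / (2 * p (pi h0))).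
  by apply: mulr_ge0; lra.
rewrite (mulrC 3 (h0.+1)%:R) -mulrA.
nra.
Qed.
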